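(* Let $f(x)=x^5+px^4+qx^3+rx^2+sx+t$ with real coefficients, and suppose $D=0$, $L_1=0$, $L_2\neq0$ and $D_2>0$ (so $f$ has two distinct real double roots and one real simple root). Then the simple root of $f$ is $C_3/L_2$, the two double roots are the roots of $L_2x^2-2C_{2,1}x+C_{2,0}$, and with $F_4=\dfrac{C_3^2}{L_2^2}+\dfrac{C_{2,0}}{L_2}-\dfrac{2C_3C_{2,1}}{L_2^2}$, $F_5=\dfrac{2C_3-2C_{2,1}}{L_2}$: (a) if $F_4>0$ and $F_5<0$: single $<$ double $<$ double; (b) if $F_4<0$: double $<$ single $<$ double; (c) if $F_4>0$ and $F_5>0$: double $<$ double $<$ single.
   Context: Let $\alpha_1,\dots,\alpha_5\in\mathbb{C}$ be the roots of $f$ listed with multiplicity. $D=\prod_{1\le i<j\le 5}(\alpha_i-\alpha_j)^2$ is the discriminant of $f$. $L_2=40qs-16p^2s-8rp^3+38rpq+3p^2q^2-12q^3-45r^2$. $L_1=-264ps^2r-12p^3tq^2+36r^3pq-124srpq^2+28srp^3q+260sptq-132p^2qrt+240pr^2t+234sqr^2+32p^4tr+48ptq^3-56sp^3t-80q^2rt+194qs^2p^2-600str-6q^3sp^2+2p^2q^2r^2-12sr^2p^2-54r^4+320s^3-8q^3r^2-8r^3p^3+250qt^2-176q^2s^2+24q^4s-36p^4s^2-100p^2t^2$. $D_2=24p^2q^4s-1100q^3rt+800p^3qst-1735p^2q^2rt-3p^2qr^2s+20pq^3rs-600p^2rst-1150pq^2st+5475pqr^2t-1380pqrs^2+1500qrst+6p^3qr^3+p^4q^2r^2-128p^6rt+660pq^4t-136p^5st-3p^4q^3s-236p^4qs^2+337p^2q^2s^2+48p^5q^2t-357p^3q^3t-12p^4r^2s-45pr^3s+60q^2r^2s-8p^2q^3r^2-500p^2qt^2-24pq^2r^3-1380p^3r^2t+408p^3rs^2-4p^5qrs+1028p^4qrt+11p^3q^2rs+36p^6s^2+100p^4t^2+9p^2r^4-48q^5s+16q^4r^2+160q^3s^2+625q^2t^2-3375r^3t+900r^2s^2$.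 $C_{2,1}=6sp^3+4q^2r-3pr^2-21spq+30sr+10p^2t-25tq-p^2rq$. $C_{2,0}=-16tp^3-75tr+3psr-4q^2s+55tpq+p^2sq$. $C_3=-34p^2rq+8rp^4+44spq-3p^3q^2-8sp^3+12pq^3+57pr^2-16q^2r+100tq-120sr-40p^2t$. *)

(* Defs.v *)
From HB Require Import structures.
From mathcomp Require Import all_boot all_order all_algebra.
Set Implicit Arguments. Unset Strict Implicit. Unset Printing Implicit Defensive.
Import Order.TTheory GRing.Theory Num.Theory.
Local Open Scope ring_scope.

Definition quintic {R : nzRingType} (p q r s t : R) : {poly R} :=
  'X^5 + p *: 'X^4 + q *: 'X^3 + r *: 'X^2 + s *: 'X + t%:P.

Definition discr_roots {R : nzRingType} (alpha : 'I_5 -> R) : R :=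
  \prod_(i < 5) \prod_(j < 5 | (i < j)%N) (alpha i - alpha j) ^+ 2.

Section Polys.
Context {R : nzRingType}.
Definition L2 (p q r s t : R) : R :=
  40 * q * s - 16 * p ^+ 2 * s - 8 * r * p ^+ 3 + 38 * r * p * q + 3 * p ^+ 2 * q ^+ 2 - 12 * q ^+ 3 - 45 * r ^+ 2.

Definition L1 (p q r s t : R) : R :=
  - 264 * p * s ^+ 2 * r - 12 * p ^+ 3 * t * q ^+ 2 + 36 * r ^+ 3 * p * q - 124 * s * r * p * q ^+ 2 + 28 * s * r * p ^+ 3 * q + 260 * s * p * t * q - 132 * p ^+ 2 * q * r * t + 240 * p * r ^+ 2 * t + 234 * s * q * r ^+ 2 + 32 * p ^+ 4 * t * r + 48 * p * t * q ^+ 3 - 56 * s * p ^+ 3 * t - 80 * q ^+ 2 * r * t + 194 * q * s ^+ 2 * p ^+ 2 - 600 * s * t * r - 6 * q ^+ 3 * s * p ^+ 2 + 2 * p ^+ 2 * q ^+ 2 * r ^+ 2 - 12 * s * r ^+ 2 * p ^+ 2 - 54 * r ^+ 4 + 320 * s ^+ 3 - 8 * q ^+ 3 * r ^+ 2 - 8 * r ^+ 3 * p ^+ 3 + 250 * q * t ^+ 2 - 176 * q ^+ 2 * s ^+ 2 + 24 * q ^+ 4 * s - 36 * p ^+ 4 * s ^+ 2 - 100 * p ^+ 2 * t ^+ 2.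

Definition D2 (p q r s t : R) : R :=
  24 * p ^+ 2 * q ^+ 4 * s - 1100 * q ^+ 3 * r * t + 800 * p ^+ 3 * q * s * t - 1735 * p ^+ 2 * q ^+ 2 * r * t - 3 * p ^+ 2 * q * r ^+ 2 * s + 20 * p * q ^+ 3 * r * s - 600 * p ^+ 2 * r * s * t - 1150 * p * q ^+ 2 * s * t + 5475 * p * q * r ^+ 2 * t - 1380 * p * q * r * s ^+ 2 + 1500 * q * r * s * t + 6 * p ^+ 3 * q * r ^+ 3 + p ^+ 4 * q ^+ 2 * r ^+ 2 - 128 * p ^+ 6 * r * t + 660 * p * q ^+ 4 * t - 136 * p ^+ 5 * s * t - 3 * p ^+ 4 * q ^+ 3 * s - 236 * p ^+ 4 * q * s ^+ 2 + 337 * p ^+ 2 * q ^+ 2 * s ^+ 2 + 48 * p ^+ 5 * q ^+ 2 * t - 357 * p ^+ 3 * q ^+ 3 * t - 12 * p ^+ 4 * r ^+ 2 * s - 45 * p * r ^+ 3 * s + 60 * q ^+ 2 * r ^+ 2 * s - 8 * p ^+ 2 * q ^+ 3 * r ^+ 2 - 500 * p ^+ 2 * q * t ^+ 2 - 24 * p * q ^+ 2 * r ^+ 3 - 1380 * p ^+ 3 * r ^+ 2 * t + 408 * p ^+ 3 * r * s ^+ 2 - 4 * p ^+ 5 * q * r * s + 1028 * p ^+ 4 * q * r * t + 11 * p ^+ 3 * q ^+ 2 * r * s + 36 * p ^+ 6 * s ^+ 2 + 100 * p ^+ 4 * t ^+ 2 + 9 * p ^+ 2 * r ^+ 4 - 48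 * q ^+ 5 * s + 16 * q ^+ 4 * r ^+ 2 + 160 * q ^+ 3 * s ^+ 2 + 625 * q ^+ 2 * t ^+ 2 - 3375 * r ^+ 3 * t + 900 * r ^+ 2 * s ^+ 2.

Definition C21 (p q r s t : R) : R :=
  6 * s * p ^+ 3 + 4 * q ^+ 2 * r - 3 * p * r ^+ 2 - 21 * s * p * q + 30 * s * r + 10 * p ^+ 2 * t - 25 * t * q - p ^+ 2 * r * q.

Definition C20 (p q r s t : R) : R :=
  - 16 * t * p ^+ 3 - 75 * t * r + 3 * p * s * r - 4 * q ^+ 2 * s + 55 * t * p * q + p ^+ 2 * s * q.

Definition C3 (p q r s t : R) : R :=
  - 34 * p ^+ 2 * r * q + 8 * r * p ^+ 4 + 44 * s * p * q - 3 * p ^+ 3 * q ^+ 2 - 8 * s * p ^+ 3 + 12 * p * q ^+ 3 + 57 * p * r ^+ 2 - 16 * q ^+ 2 * r + 100 * t * q - 120 * s * r - 40 * p ^+ 2 * t.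

End Polys.

(* Main.v *)
Require Import Defs.
From HB Require Import structures.
From mathcomp Require Import all_boot all_order all_algebra.
From mathcomp Require Import ring.
Import Order.TTheory GRing.Theory Num.Theory.
Local Open Scope ring_scope.
Set Implicit Arguments. Unset Strict Implicit.

Section Gen.
Variable C : comNzRingType.
Definition e1 (u v w x y : C) := u+v+w+x+y.
Definition e2 (u v w x y : C) := u*v+u*w+u*x+u*y+v*w+v*x+v*y+w*x+w*y+x*y.
Definition e3 (u v w x y : C) := u*v*w+u*v*x+u*v*y+u*w*x+u*w*y+u*x*y+v*w*x+v*w*y+v*x*y+w*x*y.
Definition e4 (u v w x y : C) := u*v*w*x+u*v*w*y+u*v*x*y+u*w*x*y+v*w*x*y.
Definition e5 (u v w x y : C) := u*v*w*x*y.

Lemma expand5 (u v w x y : C) :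
  ('X - u%:P) * ('X - v%:P) * ('X - w%:P) * ('X - x%:P) * ('X - y%:P) =
  quintic (-(e1 u v w x y)) (e2 u v w x y) (-(e3 u v w x y)) (e4 u v w x y) (-(e5 u v w x y)).
Proof.
rewrite /quintic /e1 /e2 /e3 /e4 /e5 -!mul_polyC.
rewrite !(polyCN, polyCD, polyCM).
ring.
Qed.

Lemma coef_quintic (p q r s t : C) :
  [/\ (quintic p q r s t)`_4 = p, (quintic p q r s t)`_3 = q, (quintic p q r s t)`_2 = r,
      (quintic p q r s t)`_1 = s & (quintic p q r s t)`_0 = t].
Proof.
rewrite /quintic !coefD !coefZ !coefXn !coefX !coefC /=.
split; rewrite /=; by rewrite ?mulr0 ?mulr1 ?addr0 ?add0r.
Qed.

Lemma quintic_roots (p q r s t u v w x y : C) :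
  quintic p q r s t = ('X - u%:P) * ('X - v%:P) * ('X - w%:P) * ('X - x%:P) * ('X - y%:P) ->
  [/\ p = -(e1 u v w x y), q = e2 u v w x y, r = -(e3 u v w x y), s = e4 u v w x y
    & t = -(e5 u v w x y)].
Proof.
rewrite expand5 => E.
have [a4 a3 a2 a1 a0] := coef_quintic p q r s t.
have [b4 b3 b2 b1 b0] := coef_quintic (-(e1 u v w x y)) (e2 u v w x y) (-(e3 u v w x y)) (e4 u v w x y) (-(e5 u v w x y)).
move: a4 a3 a2 a1 a0; rewrite E b4 b3 b2 b1 b0 => <- <- <- <- <-; by split.
Qed.

Lemma L1_id (u v w x : C) :
  L1 (-(e1 u u v w x)) (e2 u u v w x) (-(e3 u u v w x)) (e4 u u v w x) (-(e5 u u v w x))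
  = 2 * ((u-v)*(u-w)*(u-x)*(v-w)*(v-x)*(w-x))^+2.
Proof. rewrite /L1 /e1 /e2 /e3 /e4 /e5. ring. Qed.

Lemma D2_triple (u w x : C) :
  D2 (-(e1 u u u w x)) (e2 u u u w x) (-(e3 u u u w x)) (e4 u u u w x) (-(e5 u u u w x)) = 0.
Proof. rewrite /D2 /e1 /e2 /e3 /e4 /e5. ring. Qed.

Lemma D2_id (u v x : C) :
  D2 (-(e1 u u v v x)) (e2 u u v v x) (-(e3 u u v v x)) (e4 u u v v x) (-(e5 u u v v x))
  = 4 * ((u-v)^+2)^+3 * ((u-x)*(v-x))^+4.
Proof. rewrite /D2 /e1 /e2 /e3 /e4 /e5. ring. Qed.

Lemma L2_id (u v x : C) :
  L2 (-(e1 u u v v x)) (e2 u u v v x) (-(e3 u u v v x)) (e4 u u v v x) (-(e5 u u v v x))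
  = 4 * ((u-v)*(u-x)*(v-x))^+2.
Proof. rewrite /L2 /e1 /e2 /e3 /e4 /e5. ring. Qed.

Lemma C3_id (u v x : C) :
  C3 (-(e1 u u v v x)) (e2 u u v v x) (-(e3 u u v v x)) (e4 u u v v x) (-(e5 u u v v x))
  = x * (4 * ((u-v)*(u-x)*(v-x))^+2).
Proof. rewrite /C3 /e1 /e2 /e3 /e4 /e5. ring. Qed.

Lemma C21_id (u v x : C) :
  2 * C21 (-(e1 u u v v x)) (e2 u u v v x) (-(e3 u u v v x)) (e4 u u v v x) (-(e5 u u v v x))
  = (u + v) * (4 * ((u-v)*(u-x)*(v-x))^+2).
Proof. rewrite /C21 /e1 /e2 /e3 /e4 /e5. ring. Qed.

Lemma C20_id (u v x : C) :
  C20 (-(e1 u u v v x)) (e2 u u v v x) (-(e3 u u v v x)) (e4 u u v v x) (-(e5 u u v v x))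
  = u * v * (4 * ((u-v)*(u-x)*(v-x))^+2).
Proof. rewrite /C20 /e1 /e2 /e3 /e4 /e5. ring. Qed.
End Gen.


Section NC.
Variable C : numClosedFieldType.

Lemma order_cases (a b x : C) : a \is Num.real -> b \is Num.real -> x \is Num.real ->
  a < b -> x != a -> x != b ->
  [/\ (0 < (x-a)*(x-b) /\ 2*x-(a+b) < 0 -> x < a),
      ((x-a)*(x-b) < 0 -> a < x /\ x < b) &
      (0 < (x-a)*(x-b) /\ 0 < 2*x-(a+b) -> b < x)].
Proof.
move=> ha hb hx ab xa xb.
have [xa'|ax|e] := real_ltgtP hx ha; last by rewrite e eqxx in xa.
- have xb' : x < b := lt_trans xa' ab.
  have hP : 0 < (x-a)*(x-b) by rewrite nmulr_rgt0 ?subr_lt0.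
  have hS : 2*x-(a+b) < 0 by rewrite subr_lt0 mulr_natl mulr2n ltrD.
  split => //; first by move=> h; have := lt_trans hP h; rewrite ltxx.
  by case=> _ h; have := lt_trans hS h; rewrite ltxx.
- have [xb'|bx|e] := real_ltgtP hx hb; last by rewrite e eqxx in xb.
  + have hP : (x-a)*(x-b) < 0 by rewrite pmulr_rlt0 ?subr_lt0 ?subr_gt0.
    split => //.
    * by case=> h _; have := lt_trans h hP; rewrite ltxx.
    * by case=> h _; have := lt_trans h hP; rewrite ltxx.
  + have ax' : a < x := lt_trans ab bx.
    have hP : 0 < (x-a)*(x-b) by rewrite mulr_gt0 ?subr_gt0.
    have hS : 0 < 2*x-(a+b) by rewrite subr_gt0 mulr_natl mulr2n ltrD.
    split => //; first by case=> _ h; have := lt_trans h hS; rewrite ltxx.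
    by move=> h; have := lt_trans hP h; rewrite ltxx.
Qed.

Definition concl (p q r s t : C) : Prop :=
  let c := C3 p q r s t / L2 p q r s t in
  let F4 := (C3 p q r s t) ^+ 2 / (L2 p q r s t) ^+ 2 + C20 p q r s t / L2 p q r s t
            - 2 * C3 p q r s t * C21 p q r s t / (L2 p q r s t) ^+ 2 in
  let F5 := (2 * C3 p q r s t - 2 * C21 p q r s t) / L2 p q r s t in
  exists a b : C,
    [/\ a \is Num.real, b \is Num.real, a < b, c != a & c != b] /\
    quintic p q r s t = ('X - c%:P) * ('X - a%:P) ^+ 2 * ('X - b%:P) ^+ 2 /\
    (L2 p q r s t) *: 'X^2 - (2 * C21 p q r s t) *: 'X + (C20 p q r s t)%:P
      = (L2 p q r s t) *: (('X - a%:P) * ('X - b%:P)) /\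
    ((0 < F4 /\ F5 < 0) -> c < a) /\
    (F4 < 0 -> a < c /\ c < b) /\
    ((0 < F4 /\ 0 < F5) -> b < c).

Lemma fin (p q r s t a b x : C) : a \is Num.real -> b \is Num.real -> x \is Num.real ->
  a < b -> x != a -> x != b -> L2 p q r s t != 0 ->
  quintic p q r s t = ('X - a%:P) * ('X - a%:P) * ('X - b%:P) * ('X - b%:P) * ('X - x%:P) ->
  C3 p q r s t = x * L2 p q r s t ->
  2 * C21 p q r s t = (a + b) * L2 p q r s t ->
  C20 p q r s t = a * b * L2 p q r s t ->
  concl p q r s t.
Proof.
move=> ha hb hx ab xa xb hL hf h3 h21 h20.
have h21' : C21 p q r s t = (a + b) * L2 p q r s t / 2.
  by rewrite -h21 mulrC mulKf // pnatr_eq0.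
rewrite /concl.
set c := (C3 p q r s t / L2 p q r s t).
set F4 := (C3 p q r s t ^+ 2 / _ + _ - _).
set F5 := ((2 * C3 p q r s t - _) / _).
have ce : c = x by rewrite /c h3 mulfK.
have F4e : F4 = (x - a) * (x - b).
  rewrite /F4 h3 h21' h20. field. exact: hL.
have F5e : F5 = 2 * x - (a + b).
  rewrite /F5 h3 h21'. field. exact: hL.
have [o1 o2 o3] := order_cases ha hb hx ab xa xb.
exists a, b; split; first by rewrite ce.
split; first by rewrite ce hf; ring.
split.
  rewrite h21 h20 -!mul_polyC !(polyCM, polyCD, polyCN). ring.
by rewrite F4e F5e ce.
Qed.
End NC.

Section NC2.
Variable C : numClosedFieldType.

Ltac realt := repeat first [ done | apply: realD | apply: realB | apply: realM | apply: realX | rewrite realN | apply: realn ].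

Lemma reals_of (p q r s t : C) : p \is Num.real -> q \is Num.real -> r \is Num.real ->
  s \is Num.real -> t \is Num.real ->
  [/\ L2 p q r s t \is Num.real, C3 p q r s t \is Num.real,
      C21 p q r s t \is Num.real & C20 p q r s t \is Num.real].
Proof. move=> hp hq hr hs ht; rewrite /L2 /C3 /C21 /C20; split; realt. Qed.

Lemma dbl (p q r s t u v x : C) :
  p \is Num.real -> q \is Num.real -> r \is Num.real ->
  s \is Num.real -> t \is Num.real ->
  quintic p q r s t = ('X - u%:P) * ('X - u%:P) * ('X - v%:P) * ('X - v%:P) * ('X - x%:P) ->
  L2 p q r s t != 0 -> 0 < D2 p q r s t -> concl p q r s t.
Proof.
move=> hp hq hr hs ht hf hL hD.
have [Lr C3r C21r C20r] := reals_of hp hq hr hs ht.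
have [ep eq er es et] := quintic_roots hf.
have hL2e : L2 p q r s t = 4 * ((u-v)*(u-x)*(v-x))^+2 by rewrite ep eq er es et L2_id.
have h3 : C3 p q r s t = x * L2 p q r s t by rewrite hL2e ep eq er es et C3_id.
have h21 : 2 * C21 p q r s t = (u + v) * L2 p q r s t by rewrite hL2e ep eq er es et C21_id.
have h20 : C20 p q r s t = u * v * L2 p q r s t by rewrite hL2e ep eq er es et C20_id.
have hD2e : D2 p q r s t = 4 * ((u-v)^+2)^+3 * ((u-x)*(v-x))^+4
  by rewrite ep eq er es et D2_id.
have nz : (u-v)*(u-x)*(v-x) != 0.
  by apply: contraNneq hL => e; rewrite hL2e e expr0n mulr0.
move: (nz); rewrite !mulf_eq0 !negb_or subr_eq0 subr_eq0 subr_eq0 => /andP [/andP [uv ux] vx].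
have xR : x \is Num.real.
  have -> : x = C3 p q r s t / L2 p q r s t by rewrite h3 mulfK.
  by rewrite rpred_div.
have SR : u + v \is Num.real.
  have -> : u + v = 2 * C21 p q r s t / L2 p q r s t by rewrite h21 mulfK.
  by rewrite rpred_div // rpredM // rpred_nat.
have PR : u * v \is Num.real.
  have -> : u * v = C20 p q r s t / L2 p q r s t by rewrite h20 mulfK.
  by rewrite rpred_div.
have dR : (u - v) ^+ 2 \is Num.real.
  have -> : (u - v) ^+ 2 = (u + v) ^+ 2 - 4 * (u * v) by ring.
  by realt.
have mR : (u - x) * (v - x) \is Num.real.
  have -> : (u - x) * (v - x) = u * v - x * (u + v) + x ^+ 2 by ring.
  by realt.
have m4 : 0 < ((u - x) * (v - x)) ^+ 4.
  by rewrite real_exprn_even_gt0 // mulf_neq0 // subr_eq0.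
have d3 : 0 < ((u - v) ^+ 2) ^+ 3.
  move: hD; rewrite hD2e pmulr_lgt0 // pmulr_rgt0 //.
have dpos : 0 < (u - v) ^+ 2 by rewrite -(@real_exprn_odd_gt0 _ 3 _ dR).
set d := (u - v) ^+ 2 in dpos.
have sR : sqrtC d \is Num.real by apply: ger0_real; rewrite sqrtC_ge0 ltW.
have wR : u - v \is Num.real.
  have : (u - v) ^+ 2 - (sqrtC d) ^+ 2 == 0 by rewrite sqrtCK subrr.
  rewrite subr_sqr mulf_eq0 => /orP [|]; rewrite ?subr_eq0 ?addr_eq0 => /eqP ->.
    by [].
  by rewrite rpredN.
have uR : u \is Num.real.
  have -> : u = ((u + v) + (u - v)) / 2 by field.
  by apply: rpred_div; [apply: realD | apply: realn].
have vR : v \is Num.real.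
  have -> : v = ((u + v) - (u - v)) / 2 by field.
  by apply: rpred_div; [apply: realB | apply: realn].
move: uv; rewrite real_neqr_lt // => /orP [uv|vu].
  apply: (fin uR vR xR uv) => //; first by rewrite eq_sym.
  by rewrite eq_sym.
apply: (fin vR uR xR vu) => //; first by rewrite eq_sym.
- by rewrite eq_sym.
- by rewrite hf; ring.
- by rewrite addrC.
- by rewrite (mulrC v).
Qed.
End NC2.

Section NC3.
Variable C : numClosedFieldType.

Lemma triple (p q r s t u w x : C) :
  quintic p q r s t = ('X - u%:P) * ('X - u%:P) * ('X - u%:P) * ('X - w%:P) * ('X - x%:P) ->
  0 < D2 p q r s t -> False.
Proof.
move=> hf; have [ep eq er es et] := quintic_roots hf.
by rewrite ep eq er es et D2_triple ltxx.
Qed.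

Lemma key (p q r s t u v w x : C) :
  p \is Num.real -> q \is Num.real -> r \is Num.real ->
  s \is Num.real -> t \is Num.real ->
  quintic p q r s t = ('X - u%:P) * ('X - u%:P) * ('X - v%:P) * ('X - w%:P) * ('X - x%:P) ->
  L1 p q r s t = 0 -> L2 p q r s t != 0 -> 0 < D2 p q r s t -> concl p q r s t.
Proof.
move=> hp hq hr hs ht hf h1 hL hD.
have : L1 p q r s t = 2 * ((u-v)*(u-w)*(u-x)*(v-w)*(v-x)*(w-x))^+2.
  by have [ep eq er es et] := quintic_roots hf; rewrite ep eq er es et L1_id.
move=> E; move: h1; rewrite E => /eqP.
rewrite mulf_eq0 pnatr_eq0 /= expf_eq0 /= !mulf_eq0 !subr_eq0.
case/orP=> [/orP [/orP [/orP [/orP [|]|]|]|]|] /eqP e; rewrite -e in hf.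
- by case: (triple hf hD).
- by case: (@triple p q r s t u v x); first (rewrite hf; ring).
- by case: (@triple p q r s t u v w); first (rewrite hf; ring).
- exact: (dbl hp hq hr hs ht hf).
- by apply: (@dbl _ p q r s t u v w) => //; rewrite hf; ring.
- by apply: (@dbl _ p q r s t u w v) => //; rewrite hf; ring.
Qed.
End NC3.

Lemma discr_expand (C : idomainType) (alpha : 'I_5 -> C) : discr_roots alpha = 0 ->
  exists m n : nat, [/\ (m < 5)%N, (n < 5)%N, (m < n)%N & alpha (inord m) = alpha (inord n)].
Proof.
rewrite /discr_roots => /eqP; rewrite prodf_seq_eq0 => /hasP [i _ /andP [_]].
rewrite prodf_seq_eq0 => /hasP [j _ /andP [ij]].
by rewrite expf_eq0 subr_eq0 => /andP [_ /eqP e]; exists i, j; rewrite !inord_val.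
Qed.
Lemma prod5 (C : nzRingType) (F : 'I_5 -> C) : \prod_(i < 5) F i =
  F (inord 0) * F (inord 1) * F (inord 2) * F (inord 3) * F (inord 4).
Proof. rewrite !big_ord_recr big_ord0 /= mul1r.
by do ! congr (_ * _); congr F; apply: val_inj; rewrite /= inordK. Qed.

Unset Implicit Arguments.
Theorem mainTheorem11 (C : numClosedFieldType) (p q r s t : C)
  (hp : p \is Num.real) (hq : q \is Num.real) (hr : r \is Num.real)
  (hs : s \is Num.real) (ht : t \is Num.real)
  (alpha : 'I_5 -> C)
  (halpha : quintic p q r s t = \prod_(i < 5) ('X - (alpha i)%:P))
  (hD : discr_roots alpha = 0)
  (hL1 : L1 p q r s t = 0)
  (hL2 : L2 p q r s t != 0)
  (hD2 : 0 < D2 p q r s t) :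
  let c := C3 p q r s t / L2 p q r s t in
  let F4 := (C3 p q r s t) ^+ 2 / (L2 p q r s t) ^+ 2 + C20 p q r s t / L2 p q r s t
            - 2 * C3 p q r s t * C21 p q r s t / (L2 p q r s t) ^+ 2 in
  let F5 := (2 * C3 p q r s t - 2 * C21 p q r s t) / L2 p q r s t in
  exists a b : C,
    [/\ a \is Num.real, b \is Num.real, a < b, c != a & c != b] /\
    quintic p q r s t = ('X - c%:P) * ('X - a%:P) ^+ 2 * ('X - b%:P) ^+ 2 /\
    (L2 p q r s t) *: 'X^2 - (2 * C21 p q r s t) *: 'X + (C20 p q r s t)%:P
      = (L2 p q r s t) *: (('X - a%:P) * ('X - b%:P)) /\
    ((0 < F4 /\ F5 < 0) -> c < a) /\
    (F4 < 0 -> a < c /\ c < b) /\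
    ((0 < F4 /\ 0 < F5) -> b < c).
Proof.
have [m [n [hm hn hmn E]]] := discr_expand hD.
rewrite prod5 in halpha.
case: m hm hmn E => [|[|[|[|[|m]]]]] // _;
case: n hn => [|[|[|[|[|n]]]]] // _ _ E.
- apply: (@key _ p q r s t (alpha (inord 0)) (alpha (inord 2)) (alpha (inord 3)) (alpha (inord 4))) => //; rewrite halpha -E; ring.
- apply: (@key _ p q r s t (alpha (inord 0)) (alpha (inord 1)) (alpha (inord 3)) (alpha (inord 4))) => //; rewrite halpha -E; ring.
- apply: (@key _ p q r s t (alpha (inord 0)) (alpha (inord 1)) (alpha (inord 2)) (alpha (inord 4))) => //; rewrite halpha -E; ring.
- apply: (@key _ p q r s t (alpha (inord 0)) (alpha (inord 1)) (alpha (inord 2)) (alpha (inord 3))) => //; rewrite halpha -E; ring.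
- apply: (@key _ p q r s t (alpha (inord 1)) (alpha (inord 0)) (alpha (inord 3)) (alpha (inord 4))) => //; rewrite halpha -E; ring.
- apply: (@key _ p q r s t (alpha (inord 1)) (alpha (inord 0)) (alpha (inord 2)) (alpha (inord 4))) => //; rewrite halpha -E; ring.
- apply: (@key _ p q r s t (alpha (inord 1)) (alpha (inord 0)) (alpha (inord 2)) (alpha (inord 3))) => //; rewrite halpha -E; ring.
- apply: (@key _ p q r s t (alpha (inord 2)) (alpha (inord 0)) (alpha (inord 1)) (alpha (inord 4))) => //; rewrite halpha -E; ring.
- apply: (@key _ p q r s t (alpha (inord 2)) (alpha (inord 0)) (alpha (inord 1)) (alpha (inord 3))) => //; rewrite halpha -E; ring.
- apply: (@key _ p q r s t (alpha (inord 3)) (alpha (inord 0)) (alpha (inord 1)) (alpha (inord 2))) => //; rewrite halpha -E; ring.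
Qed.
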